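(* Let $b\ge 0$ be an integer and let $S$ be a nonempty subset of $\mathbb{Z}$. If $\mathbf{a}_1$ and $\mathbf{a}_2$ are two $b$-orderings of $S$, then $$\alpha_i(S,b,\mathbf{a}_1)=\alpha_i(S,b,\mathbf{a}_2)\quad\text{for all } i=0,1,2,\dots.$$
   Context: $\mathbb{N}=\{0,1,2,\dots\}$. For an integer $b\ge0$ and $a\in\mathbb{Z}$ define $\operatorname{ord}_b(a):=\sup\{k\in\mathbb{N}: a\mathbb{Z}\subseteq b^k\mathbb{Z}\}\in\mathbb{N}\cup\{+\infty\}$, with the convention $0^0=1$. Thus for $b\ge2$, $\operatorname{ord}_b(a)$ is the largest $k$ with $b^k\mid a$ and $\operatorname{ord}_b(0)=+\infty$; $\operatorname{ord}_0(a)=+\infty$ if $a=0$ and $0$ otherwise; $\operatorname{ord}_1(a)=+\infty$ for all $a$. For a nonempty $S\subseteq\mathbb{Z}$, an $S$-test sequence is any sequence $\mathbf{a}=(a_i)_{i\ge0}$ of elements of $S$ (repetitions allowed), and its $b$-exponent sequence is $\alpha_i(S,b,\mathbf{a}):=\sum_{j=0}^{i-1}\operatorname{ord}_b(a_i-a_j)$ (so $\alpha_0=0$). A $b$-ordering of $S$ is an infinite $S$-test sequence $\mathbf{a}=(a_i)_{i=0}^\infty$ such that for every $i\ge1$, $\sum_{j=0}^{i-1}\operatorname{ord}_b(a_i-a_j)=\min_{a'\in S}\sum_{j=0}^{i-1}\operatorname{ord}_b(a'-a_j)$ ($a_0\in S$ arbitrary). *)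

(* Defs.v *)
From mathcomp Require Import all_boot all_order all_algebra.
From Stdlib Require Import ClassicalEpsilon.
Set Implicit Arguments. Unset Strict Implicit. Unset Printing Implicit Defensive.
Import Order.TTheory GRing.Theory Num.Theory.

(* Extended naturals N ∪ {+oo}: [None] is +oo. *)
Definition enat := option nat.
Definition eadd (x y : enat) : enat :=
  match x, y with Some m, Some n => Some (m + n)%N | _, _ => None end.
Definition ele (x y : enat) : Prop :=
  match x, y with
  | _, None => True
  | None, Some _ => False
  | Some m, Some n => (m <= n)%N end.

(* divides b k a : a Z ⊆ b^k Z, i.e. b^k divides a (with 0^0 = 1). *)
Definition bdiv (b : nat) (a : int) (k : nat) : bool :=
  ((Posz (b ^ k)%N) %| a)%Z.

(* ord_b(a) = sup {k ∈ N : b^k | a} ∈ N ∪ {+oo}.  The set is nonempty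
   (k = 0) and downward closed, so when it is not all of N its supremum is
   the least k such that b^(k+1) does not divide a. *)
Definition ord (b : nat) (a : int) : enat :=
  match excluded_middle_informative (exists k, ~~ bdiv b a k.+1) with
  | left H => Some (ex_minn (ex_intro (fun k => ~~ bdiv b a k.+1) _
                     (proj2_sig (constructive_indefinite_description _ H))))
  | right _ => None
  end.

Definition esum (n : nat) (f : nat -> enat) : enat :=
  foldr (fun j acc => eadd (f j) acc) (Some 0%N) (iota 0 n).

Definition alpha (b : nat) (a : nat -> int) (i : nat) : enat :=
  esum i (fun j => ord b (a i - a j)).

Definition b_ordering (S : int -> Prop) (b : nat) (a : nat -> int) : Prop :=
  (forall i, S (a i)) /\
  (forall i, (0 < i)%N -> forall x, S x ->
     ele (alpha b a i) (esum i (fun j => ord b (x - a j)))).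

(* Main.v *)
Require Import Defs.
From mathcomp Require Import all_boot all_order all_algebra.
From HB Require Import structures.
From mathcomp Require Import zify.
From Stdlib Require Import ClassicalEpsilon.
Import Order.TTheory GRing.Theory Num.Theory.
Set Implicit Arguments. Unset Strict Implicit.

Lemma eaddA : associative eadd.
Proof. by case=> [x|] [y|] [z|] //=; rewrite addnA. Qed.
Lemma eaddC : commutative eadd.
Proof. by case=> [x|] [y|] //=; rewrite addnC. Qed.
Lemma eadd0 : left_id (Some 0%N) eadd.
Proof. by case. Qed.

HB.instance Definition _ := Monoid.isComLaw.Build enat (Some 0%N) eadd eaddA eaddC eadd0.

Lemma ele_refl x : ele x x.
Proof. by case: x => //= n. Qed.
Lemma ele_trans x y z : ele x y -> ele y z -> ele x z.
Proof. case: x => [x|]; case: y => [y|]; case: z => [z|] //=; exact: leq_trans. Qed.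
Lemma ele_total x y : ele x y \/ ele y x.
Proof. case: x => [x|]; case: y => [y|] //=; try by auto. exact/orP/leq_total. Qed.
Lemma ele_anti x y : ele x y -> ele y x -> x = y.
Proof. case: x => [x|]; case: y => [y|] //= h1 h2. by rewrite (@anti_leq x y) // h1 h2. Qed.
Lemma ele_add x x' y y' : ele x x' -> ele y y' -> ele (eadd x y) (eadd x' y').
Proof. case: x => [x|]; case: x' => [x'|]; case: y => [y|]; case: y' => [y'|] //=; exact: leq_add. Qed.
Lemma ele_addr x y : ele x (eadd x y).
Proof. case: x => [x|]; case: y => [y|] //=; exact: leq_addr. Qed.
Lemma eadd_cancel w x y : eadd (Some w) x = eadd (Some w) y -> x = y.
Proof. by case: x => [x|]; case: y => [y|] //= [] /eqP; rewrite eqn_add2l => /eqP ->. Qed.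

Lemma ele_ext x y : (forall k, ele (Some k) x -> ele (Some k) y) -> ele x y.
Proof.
case: x => [x|] h.
  exact: (h x (leqnn x)).
case: y h => [y|] h //=. by have := h y.+1 I; rewrite /= ltnn.
Qed.

Lemma bdiv_down b a k : bdiv b a k.+1 -> bdiv b a k.
Proof.
rewrite /bdiv !dvdzE /= => h; apply: dvdn_trans h; exact: dvdn_exp2l.
Qed.

Lemma bdiv_le b a k m : (k <= m)%N -> bdiv b a m -> bdiv b a k.
Proof.
move=> /subnKC <-; elim: (m - k)%N => [|n IH]; first by rewrite addn0.
by rewrite addnS => /bdiv_down.
Qed.

Lemma ord_charac b a k : ele (Some k) (ord b a) <-> bdiv b a k.
Proof.
rewrite /ord; case: excluded_middle_informative => [H|H] /=.
  case: ex_minnP => m Hm Hmin; split => [hk|hk].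
    case: k hk => [_|k hk]; first by rewrite /bdiv expn0 dvd1z.
    apply/negPn/negP => /Hmin; rewrite leqNgt; by move/negP; apply.
  apply/negPn/negP; rewrite -ltnNge => hl.
  by move: Hm; rewrite (@bdiv_le b a m.+1 k hl hk).
split=> // _; case: k => [|k]; first by rewrite /bdiv expn0 dvd1z.
apply/negPn/negP => hn; apply: H; by exists k.
Qed.

Lemma ord_ext b a a' : (forall k, bdiv b a k = bdiv b a' k) -> ord b a = ord b a'.
Proof.
move=> h; apply: ele_anti; apply: ele_ext => k; rewrite !ord_charac h //.
Qed.

Definition dd b (x y : int) := ord b (x - y).

Lemma dd_sym b x y : dd b x y = dd b y x.
Proof.
apply: ord_ext => k; by rewrite /bdiv !dvdzE -opprB abszN.
Qed.

Lemma dd_ultra b e x y z : ele e (dd b x y) -> ele e (dd b y z) -> ele e (dd b x z).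
Proof.
move=> h1 h2; apply: ele_ext => k hk.
have := ele_trans hk h1; have := ele_trans hk h2.
rewrite /dd !ord_charac /bdiv => u v; rewrite /bdiv.
have -> : (x - z = (x - y) + (y - z))%R by rewrite addrA subrK.
exact: rpredD.
Qed.

Lemma eadd_swap a b c d : eadd (eadd a b) (eadd c d) = eadd (eadd a d) (eadd c b).
Proof.
case: a => [a|]; case: b => [b|]; case: c => [c|]; case: d => [d|] //=.
congr Some; lia.
Qed.

Definition SS (L : seq int) (f : int -> enat) := \big[eadd/Some 0%N]_(y <- L) f y.

Fixpoint VV b (L : seq int) : enat :=
  match L with [::] => Some 0%N | x :: L' => eadd (VV b L') (SS L' (dd b x)) end.

Lemma VV_rem b t X : t \in X -> VV b X = eadd (VV b (rem t X)) (SS (rem t X) (dd b t)).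
Proof.
elim: X => [|x X0 IH] //= Ht.
case: eqP => [-> //|/eqP hne].
have Ht0 : t \in X0 by move: Ht; rewrite inE eq_sym (negbTE hne).
rewrite (IH Ht0) /=.
rewrite /SS (perm_big _ (perm_to_rem Ht0)) !big_cons -/(SS _ _) -/(SS _ _) -/(SS _ _).
by rewrite dd_sym eadd_swap.
Qed.

Lemma VV_perm b X Y : perm_eq X Y -> VV b X = VV b Y.
Proof.
elim: X Y => [|x X0 IH] Y hp.
  by move: (perm_size hp) => /=; case: Y hp.
have hx : x \in Y by rewrite -(perm_mem hp) inE eqxx.
rewrite (VV_rem b hx) /=.
have hp' : perm_eq X0 (rem x Y).
  by rewrite -(perm_cons x); apply: perm_trans hp (perm_to_rem hx).
by rewrite (IH _ hp') /SS (perm_big _ hp').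
Qed.

Lemma exists_max (f : int -> enat) (X : seq int) : X != [::] ->
  exists2 s, s \in X & forall y, y \in X -> ele (f y) (f s).
Proof.
elim: X => [|x X0 IH] // _.
case: X0 IH => [|x1 X1] IH.
  by exists x; rewrite ?inE // => y; rewrite inE => /eqP ->; apply: ele_refl.
have [s hs hmax] := IH isT.
case: (ele_total (f x) (f s)) => h.
  exists s; first by rewrite inE hs orbT.
  move=> y; rewrite inE => /orP [/eqP -> //|]; exact: hmax.
exists x; first by rewrite inE eqxx.
move=> y; rewrite inE => /orP [/eqP ->|hy]; first exact: ele_refl.
exact: ele_trans (hmax _ hy) h.
Qed.

Lemma pairing b A X : size X = (size A).+1 ->
  exists t X', perm_eq X (t :: X') /\ ele (SS A (dd b t)) (SS X' (dd b t)).
Proof.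
elim: A X => [|a A0 IH] X hs.
  case: X hs => [|x [|]] // _; exists x, [::]; split; first exact: perm_refl.
  exact: ele_refl.
have hX : X != [::] by case: X hs.
have [s hsX hmax] := exists_max (dd b a) hX.
have hsz : size (rem s X) = (size A0).+1 by rewrite size_rem // hs.
have [t [X'' [hp hle]]] := IH _ hsz.
exists t, (s :: X''); split.
  apply: perm_trans (perm_to_rem hsX) _.
  rewrite -(perm_cons s) in hp.
  apply: perm_trans hp _.
  by rewrite (perm_catCA [:: s] [:: t] X'').
rewrite /SS !big_cons -/(SS _ _) -/(SS _ _).
apply: ele_add => //.
have htX : t \in X.
  by apply: (mem_rem (x:=s)); rewrite (perm_mem hp) inE eqxx.
apply: (@dd_ultra b (dd b t a) t a s); first exact: ele_refl.
rewrite dd_sym; exact: hmax.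
Qed.

Fixpoint RR (a : nat -> int) n : seq int :=
  match n with 0 => [::] | n'.+1 => a n' :: RR a n' end.

Lemma size_RR a n : size (RR a n) = n.
Proof. by elim: n => //= n ->. Qed.

Lemma RR_in (P : int -> Prop) a n : (forall i, P (a i)) -> forall x, x \in RR a n -> P x.
Proof.
move=> hP; elim: n => [|n IH] x //=; rewrite inE => /orP [/eqP ->|]; auto.
Qed.

Lemma esum_big n g : esum n g = \big[eadd/Some 0%N]_(j <- iota 0 n) g j.
Proof.
rewrite /esum; elim: (iota 0 n) => [|j s IH] /=; first by rewrite big_nil.
by rewrite big_cons IH.
Qed.

Lemma esumS n g : esum n.+1 g = eadd (esum n g) (g n).
Proof.
rewrite !esum_big -[iota 0 n.+1]/(index_iota 0 n.+1) big_nat_recr //=.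
by rewrite /index_iota subn0.
Qed.

Lemma SS_RR a n f : SS (RR a n) f = esum n (fun j => f (a j)).
Proof.
elim: n => [|n IH]; first by rewrite /SS big_nil.
by rewrite /SS /= big_cons -/(SS _ _) IH esumS eaddC.
Qed.

Lemma alpha_SS b a n : alpha b a n = SS (RR a n) (dd b (a n)).
Proof. by rewrite SS_RR. Qed.

Lemma WS b a n : VV b (RR a n.+1) = eadd (VV b (RR a n)) (alpha b a n).
Proof. by rewrite alpha_SS. Qed.

Lemma main_min S b a : b_ordering S b a -> forall n X, size X = n.+1 ->
  (forall x, x \in X -> S x) -> ele (VV b (RR a n.+1)) (VV b X).
Proof.
move=> [hS hmin]; elim=> [|n IH] X hs hX.
  case: X hs hX => [|x [|]] // _ _; rewrite /= /SS !big_nil; exact: ele_refl.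
have hs2 : size X = (size (RR a n.+1)).+1 by rewrite size_RR.
have [t [X' [hp hle]]] := pairing b hs2.
rewrite WS (VV_perm b hp) /=.
have htX : t \in X by rewrite (perm_mem hp) inE eqxx.
apply: ele_add.
  apply: IH; first by move: (perm_size hp) => /=; rewrite hs => -[].
  by move=> x hx; apply: hX; rewrite (perm_mem hp) inE hx orbT.
apply: ele_trans hle.
have := hmin n.+1 isT t (hX _ htX).
by rewrite SS_RR.
Qed.

Lemma alpha0 b a : alpha b a 0 = Some 0%N.
Proof. by []. Qed.

Lemma esum_mono m k g : ele (esum m g) (esum (m + k) g).
Proof.
elim: k => [|k IH]; first by rewrite addn0; apply: ele_refl.
rewrite addnS esumS; apply: ele_trans IH _; exact: ele_addr.
Qed.

Lemma alpha_mono S b a m n : b_ordering S b a -> (0 < m)%N -> (m <= n)%N ->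
  ele (alpha b a m) (alpha b a n).
Proof.
move=> [hS hmin] hm /subnKC <-.
apply: ele_trans (hmin m hm _ (hS (m + (n - m))%N)) _.
exact: esum_mono.
Qed.

Lemma W_none b a n : VV b (RR a n) = None -> exists2 m, (m < n)%N & alpha b a m = None.
Proof.
elim: n => [|n IH] //; rewrite WS.
case E: (VV b (RR a n)) => [w|].
  case E2: (alpha b a n) => [x|] //= _; by exists n.
move=> _; have [m hm hn] := IH E; exists m => //; exact: ltnW.
Qed.

Lemma alpha_none S b a n : b_ordering S b a -> VV b (RR a n) = None -> alpha b a n = None.
Proof.
move=> hb /W_none [m hm hn].
have hm0 : (0 < m)%N by case: m hm hn.
have := alpha_mono hb hm0 (ltnW hm); rewrite hn.
by case: (alpha b a n).
Qed.

Theorem theorem3p3 (b : nat) (S : int -> Prop) (HS : exists s, S s)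
  (a1 a2 : nat -> int) :
  b_ordering S b a1 -> b_ordering S b a2 ->
  forall i : nat, alpha b a1 i = alpha b a2 i.
Proof.
move=> h1 h2.
have hW : forall n, VV b (RR a1 n) = VV b (RR a2 n).
  case=> [//|n]; apply: ele_anti.
    apply: (main_min h1); first by rewrite size_RR.
    apply: RR_in; exact: h2.1.
  apply: (main_min h2); first by rewrite size_RR.
  apply: RR_in; exact: h1.1.
move=> i; have := hW i.+1; rewrite !WS hW.
case E: (VV b (RR a2 i)) => [w|] hE.
  exact: eadd_cancel hE.
rewrite (alpha_none h2 E) (alpha_none h1) // hW //.
Qed.
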